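(* In the compulsory constrained two-facility location game described in the context, every deterministic strategyproof mechanism has approximation ratio at least $3$ under the sum cost objective.
   Context: An instance consists of $n$ agents with private locations $x_1,\dots,x_n\in\mathbb{R}$, each served by both facilities $F_1,F_2$, and a finite multiset $A=\{a_1\le\dots\le a_m\}$ of real alternative locations. A deterministic mechanism $f$ maps each instance (reported locations and $A$) to $(y_1,y_2)$ with $y_1\in A$, $y_2\in A\setminus\{y_1\}$ (one copy removed from the multiset). Agent $j$'s cost is $c_j(\mathbf{y},x_j)=\max\{|y_1-x_j|,|y_2-x_j|\}$; the sum cost is $sc(\mathbf{y},\mathbf{x})=\sum_j c_j(\mathbf{y},x_j)$. $f$ is strategyproof if no agent can strictly decrease her true cost by misreporting her own location, whatever the others report. The approximation ratio of $f$ is $\sup_{\text{instances}} sc(f(\mathbf{x}),\mathbf{x})/sc(OPT,\mathbf{x})$, where $OPT$ minimizes the sum cost over feasible outcomes. *)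

(* Defs.v *)
From HB Require Import structures.
From mathcomp Require Import all_boot all_order all_algebra.
From mathcomp Require Import reals.
Set Implicit Arguments. Unset Strict Implicit. Unset Printing Implicit Defensive.
Import Order.TTheory GRing.Theory Num.Theory.
Local Open Scope ring_scope.

Section TwoFacility.
Variable R : realType.

Definition outcome := (R * R)%type.

(* Feasibility w.r.t. the multiset A (a seq): y1 in A, y2 in A minus one copy of y1. *)
Definition feasible (A : seq R) (y : outcome) : bool :=
  (y.1 \in A) && (y.2 \in rem y.1 A).

Definition cost (y : outcome) (xj : R) : R := Num.max `|y.1 - xj| `|y.2 - xj|.

Definition sc (n : nat) (y : outcome) (x : 'I_n -> R) : R :=
  \sum_(j < n) cost y (x j).

Definition mechanism := forall n : nat, ('I_n -> R) -> seq R -> outcome.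

Definition feasible_mech (f : mechanism) : Prop :=
  forall n (x : 'I_n -> R) (A : seq R), (1 < size A)%N -> feasible A (f n x A).

Definition update n (x : 'I_n -> R) (j : 'I_n) (xj' : R) : 'I_n -> R :=
  fun i => if i == j then xj' else x i.

Definition strategyproof (f : mechanism) : Prop :=
  forall n (x : 'I_n -> R) (A : seq R) (j : 'I_n) (xj' : R),
    (1 < size A)%N ->
    cost (f n x A) (x j) <= cost (f n (update x j xj') A) (x j).

Definition is_opt n (x : 'I_n -> R) (A : seq R) (y : outcome) : Prop :=
  feasible A y /\ forall y', feasible A y' -> sc y x <= sc y' x.

(* The approximation ratio sup_I sc(f(I))/sc(OPT(I)) is at least rho:
   for every r < rho some instance has sc(f) > r * sc(OPT)
   (covering the infinite-ratio case sc(OPT) = 0 < sc(f)). *)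
Definition approx_ratio_ge (f : mechanism) (rho : R) : Prop :=
  forall r : R, r < rho ->
    exists n (x : 'I_n -> R) (A : seq R) (yopt : outcome),
      (1 < size A)%N /\ is_opt x A yopt /\ r * sc yopt x < sc (f n x A) x.

End TwoFacility.

(* Main.v *)
Require Import Defs.
From HB Require Import structures.
From mathcomp Require Import all_boot all_order all_algebra.
From mathcomp Require Import reals.
From mathcomp Require Import lra.
Set Implicit Arguments.
Import Order.TTheory GRing.Theory Num.Theory.
Local Open Scope ring_scope.

Lemma pick_e (R : realType) (r : R) : r < 3 ->
  exists e : R, [/\ 0 < e, e < 1 & r * (1 + e) < 3 - e].
Proof.
move=> hr; case: (lerP r 1) => h.
  by exists (1/2); split; lra.
exists ((3 - r)/8); split; try lra.
nra.
Qed.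

Lemma sc2 (R : realType) (y : outcome R) (x : 'I_2 -> R) :
  sc y x = cost y (x ord0) + cost y (x ord_max).
Proof. rewrite /sc big_ord_recr /= big_ord1. by congr (cost _ (x _) + _); apply/val_inj. Qed.

Lemma cost_lb (R : realType) (y : outcome R) (z : R) :
  [/\ y.1 - z <= cost y z, z - y.1 <= cost y z, y.2 - z <= cost y z & z - y.2 <= cost y z].
Proof.
rewrite /cost; split.
- by rewrite le_max ler_norm.
- by rewrite le_max distrC ler_norm.
- by rewrite le_max ler_norm orbT.
- by rewrite le_max [`|y.2 - z|]distrC ler_norm orbT.
Qed.

Lemma cost_dup (R : realType) (a z : R) : cost (a, a) z = `|a - z|.
Proof. by rewrite /cost /= maxxx. Qed.

Lemma feasA (R : realType) (y : outcome R) :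
  feasible [:: 0; 0; 2; 2] y -> (y.1 = 0 \/ y.1 = 2) /\ (y.2 = 0 \/ y.2 = 2).
Proof.
case/andP => h1 /mem_rem h2.
move: h1 h2; rewrite !inE => h1 h2.
split.
- by case/or4P: h1 => /eqP ->; auto.
- by case/or4P: h2 => /eqP ->; auto.
Qed.

Arguments feasA {R y}.

Theorem theorem1 (R : realType) (f : mechanism R) :
  feasible_mech f -> strategyproof f -> approx_ratio_ge f 3.
Proof.
move=> Hf Hsp r hr.
have [e [e0 e1 he]] := @pick_e R r hr.
pose A : seq R := [:: 0; 0; 2; 2].
have sA : (1 < size A)%N by [].
pose xb : 'I_2 -> R := fun i => if i == ord0 then 1 - e else 1 + e.
have xb0 : xb ord0 = 1 - e by rewrite /xb eqxx.
have xb1 : xb ord_max = 1 + e by [].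
have n20 : ((2:R) == 0) = false by rewrite pnatr_eq0.
have n02 : ((0:R) == 2) = false by rewrite eq_sym n20.
have fe22 : feasible A (2, 2) by rewrite /feasible /= n02 eqxx /= !inE eqxx !orbT.
have fe00 : feasible A (0, 0) by rewrite /feasible /= eqxx /= !inE eqxx.
set y := f 2 xb A.
have [hy1 hy2] := feasA (Hf 2 xb A sA).
case: (boolP ((y.1 == 0) || (y.2 == 0))) => H0.
-
  have cy : 1 + e <= cost y (1 + e).
    have [_ a _ b] := cost_lb y (1 + e).
    by case/orP: H0 => /eqP h; [move: a; rewrite h subr0|move: b; rewrite h subr0].
  have hsp := Hsp 2 xb A ord_max 2 sA.
  rewrite xb1 -/y in hsp.
  set x' := update xb ord_max 2 in hsp.
  have x'0 : x' ord0 = 1 - e by [].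
  have x'1 : x' ord_max = 2 by rewrite /x' /update eqxx.
  set y' := f 2 x' A in hsp.
  have [hy'1 hy'2] := feasA (Hf 2 x' A sA).
  have H0' : (y'.1 = 0) \/ (y'.2 = 0).
    case: hy'1 => h1; first by left.
    case: hy'2 => h2; first by right.
    exfalso; move: hsp; rewrite (_ : y' = (2, 2)); last by rewrite (surjective_pairing y') h1 h2.
    rewrite cost_dup ger0_norm; lra.
  have lb : 3 - e <= sc y' x'.
    rewrite sc2 x'0 x'1.
    have [_ a _ b] := cost_lb y' (1 - e).
    have [_ c _ d] := cost_lb y' 2.
    case: H0' => h; rewrite h subr0 in a b c d; lra.
  have opt : sc (2, 2) x' = 1 + e.
    by rewrite sc2 x'0 x'1 !cost_dup subrr normr0 addr0 ger0_norm //; lra.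
  exists 2%N, x', A, (2, 2); split => //; split; last first.
    by rewrite opt; apply: lt_le_trans lb.
  split => // z /feasA [hz1 hz2].
  rewrite opt sc2 x'0 x'1.
  have [a1 a2 a3 a4] := cost_lb z (1 - e).
  have [c1 c2 c3 c4] := cost_lb z 2.
  case: hz1 => h1; first by rewrite h1 in a2 c2; lra.
  case: hz2 => h2; first by rewrite h2 in a4 c4; lra.
  rewrite h1 in a1; lra.
-
  have [h1 h2] : y.1 = 2 /\ y.2 = 2.
    case: hy1 hy2 H0 => -> ; case => ->; rewrite ?eqxx //= ?orbT //.
  have cy : 1 + e <= cost y (1 - e).
    have [a _ _ _] := cost_lb y (1 - e).
    by rewrite h1 in a; lra.
  have hsp := Hsp 2 xb A ord0 0 sA.
  rewrite xb0 -/y in hsp.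
  set x' := update xb ord0 0 in hsp.
  have x'0 : x' ord0 = 0 by rewrite /x' /update eqxx.
  have x'1 : x' ord_max = 1 + e by [].
  set y' := f 2 x' A in hsp.
  have [hy'1 hy'2] := feasA (Hf 2 x' A sA).
  have H0' : (y'.1 = 2) \/ (y'.2 = 2).
    case: hy'1 => h1'; last by left.
    case: hy'2 => h2'; last by right.
    exfalso; move: hsp; rewrite (_ : y' = (0, 0)); last by rewrite (surjective_pairing y') h1' h2'.
    rewrite cost_dup sub0r normrN ger0_norm; lra.
  have lb : 3 - e <= sc y' x'.
    rewrite sc2 x'0 x'1.
    have [a _ b _] := cost_lb y' 0.
    have [c _ d _] := cost_lb y' (1 + e).
    case: H0' => h; rewrite h subr0 in a b c d; lra.
  have opt : sc (0, 0) x' = 1 + e.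
    by rewrite sc2 x'0 x'1 !cost_dup subrr normr0 add0r sub0r normrN ger0_norm //; lra.
  exists 2%N, x', A, (0, 0); split => //; split; last first.
    by rewrite opt; apply: lt_le_trans lb.
  split => // z /feasA [hz1 hz2].
  rewrite opt sc2 x'0 x'1.
  have [a1 a2 a3 a4] := cost_lb z 0.
  have [c1 c2 c3 c4] := cost_lb z (1 + e).
  case: hz1 => h1'; last by rewrite h1' in a1 c1; lra.
  case: hz2 => h2'; last by rewrite h2' in a3 c3; lra.
  rewrite h1' in c2; lra.
Qed.
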